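(* Let $p$ be a prime, $m,t\ge 1$, $B=\mathrm{GF}(p^m)$ and $F=\mathrm{GF}(p^{mt})$, and assume that $t$ is divisible by $p$ (the characteristic of $F$). Let $n=|F|=|B|^t$, $k=n(1-1/|B|)$, and let $\mathcal{C}=\mathrm{RS}(F,k)=\{(f(\alpha))_{\alpha\in F} : f\in F[x],\ \deg f\le k-1\}$, where the symbol $f(\alpha)$ is stored at the node indexed by $\alpha$. Let $K=\ker(\mathrm{Tr}_{F/B})$. Suppose $f(\alpha^* )$, $f(\overline{\alpha})$, $f(\alpha')$ are three erased symbols, with $\alpha^*,\overline{\alpha},\alpha'$ distinct, such that $$\left\{\frac{\overline{\alpha}-\alpha^*}{\overline{\alpha}-\alpha'},\ \frac{\alpha'-\overline{\alpha}}{\alpha'-\alpha^*},\ \frac{\alpha^*-\alpha'}{\alpha^*-\overline{\alpha}}\right\}\cap K\neq\varnothing.$$ Then there exists a distributed repair scheme in which all three erased symbols are recovered with a total repair bandwidth of $3(n-1)$ sub-symbols (elements of $B$).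
   Context: Elements of $F$ are called symbols and elements of $B$ sub-symbols. The trace is $\mathrm{Tr}_{F/B}(x)=\sum_{i=0}^{t-1}x^{|B|^i}$. In distributed repair, each erased symbol is reconstructed at its own replacement node; replacement nodes download sub-symbols from surviving nodes (computed from the surviving node's stored symbol) and may exchange sub-symbols among themselves (computed from data they have already obtained). The repair bandwidth is the total number of sub-symbols downloaded by all replacement nodes. *)

(* Defs.v *)
From Stdlib Require List.
From mathcomp Require Import all_boot all_order all_algebra all_field.
Set Implicit Arguments. Unset Strict Implicit. Unset Printing Implicit Defensive.
Import GRing.Theory.
Local Open Scope ring_scope.

Section Defs.
Variable F : finFieldType.

(* The subfield B = GF(q) of F (q = |B|): the elements fixed by x |-> x^q. *)
Definition subB (q : nat) : {set F} := [set x : F | x ^+ q == x].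

Definition trace (q t : nat) (x : F) : F := \sum_(i < t) x ^+ (q ^ i).

Definition traceKer (q t : nat) : {set F} := [set x | trace q t x == 0].

Definition RS_codeword (k : nat) (c : F -> F) : Prop :=
  exists f : {poly F}, (size f <= k)%N /\ forall a, c a = f.[a].

Definition erased3 (a1 a2 a3 : F) (i : 'I_3) : F := nth a1 [:: a1; a2; a3] i.

(* A distributed repair scheme for three erased nodes (replacement nodes 0,1,2):
   - dl i a : the list of download functions applied by surviving node a to its
     stored symbol; each produces one sub-symbol sent to replacement node i;
   - xch : the ordered list of exchange messages (sender, receiver, h): the
     sender computes one sub-symbol h(data it has obtained so far) and sends it
     to the receiver;
   - rec i : how replacement node i computes the erased symbol from all the
     data it has obtained. *)
Record drepair := DRepair {
  dl : 'I_3 -> F -> seq (F -> F);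
  xch : seq ('I_3 * 'I_3 * (seq F -> F));
  rec : 'I_3 -> seq F -> F }.

Definition survivors (er : 'I_3 -> F) : seq F :=
  [seq a <- enum F | a \notin [seq er i | i <- enum 'I_3]].

Definition init_know (er : 'I_3 -> F) (S : drepair) (c : F -> F) (i : 'I_3)
  : seq F :=
  flatten [seq [seq g (c a) | g <- dl S i a] | a <- survivors er].

Definition xstep (kn : 'I_3 -> seq F) (x : 'I_3 * 'I_3 * (seq F -> F))
  : 'I_3 -> seq F :=
  fun j => if j == x.1.2 then rcons (kn j) (x.2 (kn x.1.1)) else kn j.

Definition final_know (er : 'I_3 -> F) (S : drepair) (c : F -> F)
  : 'I_3 -> seq F :=
  foldl xstep (init_know er S c) (xch S).

Definition bandwidth (er : 'I_3 -> F) (S : drepair) : nat :=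
  (\sum_(i < 3) \sum_(a <- survivors er) size (dl S i a) + size (xch S))%N.

Definition valid_repair (q k : nat) (er : 'I_3 -> F) (S : drepair) : Prop :=
  [/\ (forall i a g, List.In g (dl S i a) -> forall y, g y \in subB q),
      (forall x, List.In x (xch S) -> forall s, x.2 s \in subB q) &
      (forall c, RS_codeword k c -> forall i,
          rec S i (final_know er S c i) = c (er i))].

End Defs.

(* Main.v *)
Require Import Defs.
From Stdlib Require Import ClassicalEpsilon.
From mathcomp Require Import zify.
From mathcomp Require Import all_boot all_order all_algebra all_field.
Set Implicit Arguments. Unset Strict Implicit. Unset Printing Implicit Defensive.
Import GRing.Theory.
Local Open Scope ring_scope.

Lemma sz (F : finFieldType) (er : 'I_3 -> F) (hi : injective er) : (size (survivors er) + 3 = #|F|)%N.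
Proof.
rewrite /survivors.
set L := [seq er i | i <- enum 'I_3].
have uL : uniq L by rewrite map_inj_uniq ?enum_uniq.
have sL : size L = 3%N by rewrite size_map size_enum_ord.
rewrite -(cardC (mem L)) addnC (card_uniqP uL) sL; congr (_ + _)%N.
rewrite cardE /enum_mem size_filter /= size_filter.
rewrite count_filter; apply: eq_count => a; by rewrite !inE andbT.
Qed.


Section Field.
Variables (p m t : nat) (F : finFieldType).
Hypotheses (hp : prime p) (hm : (0 < m)%N) (ht : (0 < t)%N) (hpt : (p %| t)%N)
  (hF : #|F| = (p ^ (m * t))%N).

Let q := (p ^ m)%N.
Let Tr := @trace F q t.

Lemma charF : p \in [pchar F].
Proof. exact: card_finPcharP hF hp. Qed.

Lemma q_gt1 : (1 < q)%N.
Proof. by rewrite /q -{1}(expn0 p) ltn_exp2l ?prime_gt1. Qed.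

Lemma cardq : #|F| = (q ^ t)%N.
Proof. by rewrite hF /q expnM. Qed.

Lemma frobD (x y : F) e : (x + y) ^+ (q ^ e) = x ^+ (q ^ e) + y ^+ (q ^ e).
Proof.
apply: exprDn_pchar; rewrite /q -expnM pnatX (pnatE _ hp) charF //.
Qed.

Lemma frob0 e : (0 : F) ^+ (q ^ e) = 0.
Proof. rewrite expr0n expn_eq0 /q expn_eq0. have := prime_gt0 hp. by case: p.
 Qed.

Lemma TrD x y : Tr (x + y) = Tr x + Tr y.
Proof. by rewrite /Tr /trace -big_split; apply: eq_bigr => i _; rewrite frobD. Qed.

Lemma Tr0 : Tr 0 = 0.
Proof. by rewrite /Tr /trace big1 // => i _; rewrite frob0. Qed.

Lemma TrN x : Tr (- x) = - Tr x.
Proof. by apply/eqP; rewrite -subr_eq0 opprK -TrD addNr Tr0. Qed.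

Lemma TrB x y : Tr (x - y) = Tr x - Tr y.
Proof. by rewrite TrD TrN. Qed.

Lemma Tr_sum (I : Type) (r : seq I) (P : pred I) (f : I -> F) :
  Tr (\sum_(i <- r | P i) f i) = \sum_(i <- r | P i) Tr (f i).
Proof. exact: (big_morph Tr TrD Tr0). Qed.

Lemma Tr1 : Tr 1 = 0.
Proof.
rewrite /Tr /trace (eq_bigr (fun _ => 1)) => [|i _]; last by rewrite expr1n.
rewrite sumr_const card_ord; case/dvdnP: hpt => s ->.
by rewrite natrM (pcharf0 charF) mulr0.
Qed.

Lemma TrN1 : Tr (-1) = 0.
Proof. by rewrite TrN Tr1 oppr0. Qed.

Lemma fixB (b : F) e : b ^+ q = b -> b ^+ (q ^ e) = b.
Proof. by move=> hb; elim: e => // e IH; rewrite expnSr exprM IH. Qed.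

Lemma TrZ b x : b ^+ q = b -> Tr (b * x) = b * Tr x.
Proof.
move=> hb; rewrite /Tr /trace mulr_sumr; apply: eq_bigr => i _.
by rewrite exprMn (fixB _ hb).
Qed.

Lemma TrB_in x : Tr x ^+ q = Tr x.
Proof.
have fq : forall y : F, y ^+ q = y ^+ (q ^ 1) by move=> y; rewrite expn1.
rewrite fq /Tr /trace.
rewrite (big_morph (fun y : F => y ^+ (q ^ 1)) (fun a b => frobD a b 1) (frob0 1)).
rewrite (eq_bigr (fun i : 'I_t => x ^+ (q ^ i.+1))) => [|i _]; last first.
  by rewrite -exprM -expnD addn1.
have xt : x ^+ (q ^ t) = x by rewrite -cardq expf_card.
move: xt; case: t ht => // t' _ xt.
rewrite big_ord_recr big_ord_recl /= expn0 expr1 xt.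
by rewrite addrC.
Qed.

Lemma Tr_in x : Tr x \in subB F q.
Proof. by rewrite inE TrB_in. Qed.


Lemma sum_pow i : (i < #|F|.-1)%N -> \sum_(a : F) a ^+ i = 0.
Proof.
case: i => [_|i hi].
  rewrite (eq_bigr (fun _ => 1)) => [|a _]; last by rewrite expr0.
  rewrite sumr_const -[_ *+ _]/(_%:R) hF natrX (pcharf0 charF) expr0n.
  by rewrite muln_eq0 (gtn_eqF hm) (gtn_eqF ht).
have [b bnz bi] : exists2 b : F, b != 0 & b ^+ i.+1 != 1.
  case: (boolP [exists b : F, (b != 0) && (b ^+ i.+1 != 1)]).
    by case/existsP => b /andP[]; exists b.
  rewrite negb_exists => /forallP hall; exfalso.
  have Pnz : ('X^(i.+1) - 1 : {poly F}) != 0.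
    by rewrite -size_poly_eq0 -[1]/(1%:P) size_XnsubC.
  have := @max_poly_roots _ _ (enum [set~ (0:F)]) Pnz.
  rewrite enum_uniq -cardE cardsC1 -[1]/(1%:P) size_XnsubC // ltnS.
  rewrite leqNgt hi => H; apply: notF; apply: H; last done.
  apply/allP => b; rewrite mem_enum in_setC1 => bnz.
  have := hall b; rewrite bnz /= negbK => /eqP hb.
  by rewrite /root !hornerE hb subrr.
set S := \sum_(a : F) a ^+ i.+1.
have : S = b ^+ i.+1 * S.
  rewrite {1}/S (reindex_inj (mulfI bnz)) /= mulr_sumr.
  by apply: eq_bigr => a _; rewrite exprMn.
move/eqP; rewrite -subr_eq0 -{1}(mul1r S) -mulrBl mulf_eq0 subr_eq0 eq_sym.
by rewrite (negbTE bi) => /eqP.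
Qed.

Lemma sum_poly (P : {poly F}) : (size P <= #|F|.-1)%N -> \sum_(a : F) P.[a] = 0.
Proof.
move=> hP; under eq_bigr do rewrite horner_coef.
rewrite exchange_big big1 // => i _.
by rewrite -mulr_sumr sum_pow ?mulr0 // (leq_trans (ltn_ord i) hP).
Qed.

Lemma Tr_nondeg x : (forall u, Tr (u * x) = 0) -> x = 0.
Proof.
case: (eqVneq x 0) => // xnz h; exfalso.
have allz : forall v, Tr v = 0 by move=> v; rewrite -(divfK xnz v) h.
pose P : {poly F} := \sum_(i < t) 'X^(q ^ i).
have hPv : forall v, P.[v] = Tr v.
  by move=> v; rewrite /P horner_sum; apply: eq_bigr => i _; rewrite hornerXn.
have q1 := q_gt1.
have P1 : P`_1 = 1.
  rewrite /P coef_sum; case: t ht => // t' _.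
  rewrite big_ord_recl /= expn0 coefXn eqxx big1 ?addr0 // => i _.
  rewrite coefXn; case: eqP => // /esym h1.
  have : (q ^ 0 < q ^ (bump 0 i))%N by rewrite ltn_exp2l.
  by rewrite h1 expn0 ltnn.
have Pnz : P != 0 by apply/eqP => P0; move: P1; rewrite P0 coef0 => /eqP; rewrite eq_sym oner_eq0.
have szP : (size P <= (q ^ t.-1).+1)%N.
  apply: (big_ind (fun r : {poly F} => size r <= (q ^ t.-1).+1)%N).
  - by rewrite size_poly0.
  - by move=> r s hr hs; apply: leq_trans (size_add _ _) _; rewrite geq_max hr hs.
  - move=> i _; rewrite size_polyXn ltnS leq_exp2l //.
    by case: t ht i => // t' _ i; rewrite /= -ltnS.
have := @max_poly_roots _ _ (enum F) Pnz.
rewrite enum_uniq -cardE cardq.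
have -> : all (root P) (enum F) by apply/allP => v _; rewrite /root hPv allz.
move=> /(_ isT isT) H.
have : (q ^ t.-1 < q ^ t)%N by rewrite ltn_exp2l // prednK.
by move=> lt; have := leq_trans H szP; rewrite ltnS leqNgt lt.
Qed.

Lemma dual (d : {poly F}) a u : (size d <= #|F| - #|F| %/ q)%N ->
  Tr (u * d.[a]) + \sum_(b : F | b != a) Tr (u * (b - a)) * Tr (d.[b] / (b - a)) = 0.
Proof.
move=> hd.
have q1 := q_gt1.
pose g : {poly F} := \sum_(i < t) (u ^+ (q ^ i)) *: ('X - a%:P) ^+ (q ^ i).-1.
have szg : (size g <= q ^ t.-1)%N.
  apply: (big_ind (fun r : {poly F} => size r <= q ^ t.-1)%N).
  - by rewrite size_poly0.
  - by move=> r s hr hs; apply: leq_trans (size_add _ _) _; rewrite geq_max hr hs.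
  - move=> i _; apply: leq_trans (size_scale_leq _ _) _.
    rewrite size_exp_XsubC prednK; last by rewrite expn_gt0 (ltnW q1).
    rewrite leq_exp2l //.
    by case: t ht i => // t' _ i; rewrite /= -ltnS.
have ndiv : (#|F| %/ q = q ^ t.-1)%N.
  by rewrite cardq; case: t ht => // t' _; rewrite expnSr mulnK // ltnW.
have Nle : (q ^ t.-1 <= #|F|)%N by rewrite -ndiv leq_div.
have szdg : (size (d * g)%R <= #|F|.-1)%N.
  apply: leq_trans (size_mul_leq _ _) _.
  move: hd; rewrite ndiv => hd.
  move: szg Nle hd; set N := (q ^ t.-1)%N; set n := #|F|; set sd := size d; set sg := size g.
  move=> *; lia.
have ga : g.[a] = u.
  rewrite /g horner_sum; case: t ht => // t' _.
  rewrite big_ord_recl /= expn0 expr0 hornerZ hornerC expr1 mulr1 big1 ?addr0 // => i _.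
  rewrite hornerZ horner_exp hornerXsubC subrr expr0n.
  have : (q ^ 0 < q ^ (bump 0 i))%N by rewrite ltn_exp2l.
  by rewrite expn0; case: (q ^ bump 0 i)%N => [|[|e]] //= _; rewrite mulr0.
have gb : forall b, b != a -> g.[b] = Tr (u * (b - a)) / (b - a).
  move=> b ba; have bnz : b - a != 0 by rewrite subr_eq0.
  rewrite /g horner_sum /Tr /trace mulr_suml; apply: eq_bigr => i _.
  rewrite hornerZ horner_exp hornerXsubC.
  have : (0 < q ^ i)%N by rewrite expn_gt0 ltnW.
  case: (q ^ i)%N => // e _ /=.
  by rewrite exprMn [(b - a) ^+ e.+1]exprSr mulrA mulfK.
have := sum_poly szdg; rewrite (bigD1 a) //= hornerM ga.
move=> /(congr1 Tr); rewrite Tr0 TrD Tr_sum => H; rewrite -[X in _ = X]H [d.[a] * u]mulrC.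
congr (_ + _); apply: eq_bigr => b ba; rewrite hornerM gb // mulrA mulrAC -mulrA.
by rewrite [(b - a)^-1 * _]mulrC mulrCA (TrZ _ (TrB_in _)).
Qed.

Let k := (#|F| - #|F| %/ q)%N.
Let RS := @RS_codeword F k.

Lemma RS_sub c c' : RS c -> RS c' ->
  exists d : {poly F}, (size d <= k)%N /\ forall a, d.[a] = c a - c' a.
Proof.
move=> [f [hf ef]] [f' [hf' ef']]; exists (f - f'); split.
  by apply: leq_trans (size_add _ _) _; rewrite size_opp geq_max hf hf'.
by move=> a; rewrite hornerD hornerN ef ef'.
Qed.

Definition decode (K : (F -> F) -> seq F) (V : (F -> F) -> F) (kn : seq F) : F :=
  match excluded_middle_informative (exists c, RS c /\ K c = kn) with
  | left H => V (proj1_sig (constructive_indefinite_description _ H))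
  | right _ => 0
  end.

Lemma decodeP K V : (forall c c', RS c -> RS c' -> K c = K c' -> V c = V c') ->
  forall c, RS c -> decode K V (K c) = V c.
Proof.
move=> hdet c Rc; rewrite /decode; case: excluded_middle_informative => [H|nH].
  case: (constructive_indefinite_description _ H) => c0 [R0 K0] /=.
  exact: hdet R0 Rc K0.
by exfalso; apply: nH; exists c.
Qed.

Lemma decodeB K V kn : (forall c, RS c -> V c \in subB F q) -> decode K V kn \in subB F q.
Proof.
move=> hV; rewrite /decode; case: excluded_middle_informative => [H|nH].
  case: (constructive_indefinite_description _ H) => c0 [R0 K0] /=.
  exact: hV.
by rewrite inE -{1}(expn1 q) frob0.
Qed.

Variable er : 'I_3 -> F.
Hypothesis er_inj : injective er.

Definition surv := survivors er.

Lemma surv_cases a i : a != er i -> a \in surv \/ exists2 j, j != i & a = er j.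
Proof.
move=> ai; rewrite /surv /survivors mem_filter mem_enum andbT.
case: (boolP (a \in _)) => [/mapP[j _ aj]|]; last by left.
right; exists j => //; apply/eqP => ji; by move: ai; rewrite aj ji eqxx.
Qed.

Definition Kinit i (c : F -> F) := map (fun a => Tr (c a / (a - er i))) surv.
Definition Z i j (c : F -> F) := Tr (c (er j) / (er j - er i)).

Lemma detU i u c c' : RS c -> RS c' -> Kinit i c = Kinit i c' ->
  (forall j, j != i -> Tr (u * (er j - er i)) = 0 \/ Z i j c = Z i j c') ->
  Tr (u * c (er i)) = Tr (u * c' (er i)).
Proof.
move=> Rc Rc' /eq_in_map hK hZ.
have [d [hd ed]] := RS_sub Rc Rc'.
have := dual (er i) u hd.
rewrite big1 ?addr0 => [|b bi].
  by rewrite ed mulrBr TrB => /eqP; rewrite subr_eq0 => /eqP.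
have Td : Tr (c b / (b - er i)) = Tr (c' b / (b - er i)) -> Tr (d.[b] / (b - er i)) = 0.
  by rewrite ed mulrBl TrB => ->; rewrite subrr.
case: (surv_cases bi) => [bs|[j ji bj]].
  by rewrite Td ?mulr0 //; apply: hK.
case: (hZ j ji) => [hj|hz]; first by rewrite bj hj mul0r.
by rewrite Td ?mulr0 // bj.
Qed.

Lemma detG i c c' : RS c -> RS c' -> Kinit i c = Kinit i c' ->
  (forall j, j != i -> Z i j c = Z i j c') -> c (er i) = c' (er i).
Proof.
move=> Rc Rc' hK hZ; apply/eqP; rewrite -subr_eq0; apply/eqP.
apply: Tr_nondeg => u; rewrite mulrBr TrB (@detU i u c c' Rc Rc' hK) ?subrr //.
by move=> j ji; right; apply: hZ.
Qed.

Variables h x y : 'I_3.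
Hypotheses (hxh : x != h) (hyh : y != h) (hxy : x != y).
Hypothesis hcov : forall j : 'I_3, [|| j == h, j == x | j == y].
Hypothesis hcond : Tr ((er h - er x) / (er y - er x)) = 0.

Lemma hyx : y != x. Proof. by rewrite eq_sym. Qed.
Lemma hhx : h != x. Proof. by rewrite eq_sym. Qed.
Lemma hhy : h != y. Proof. by rewrite eq_sym. Qed.

Lemma er_neq i j : i != j -> er i - er j != 0.
Proof. by move=> ij; rewrite subr_eq0 (inj_eq er_inj). Qed.

Lemma other_b (i j l j' : 'I_3) : j != i -> l != i -> j != l -> j' != i -> (j' == j) || (j' == l).
Proof.
by case: i => [[|[|[|?]]] ?]; case: j => [[|[|[|?]]] ?]; case: l => [[|[|[|?]]] ?];
  case: j' => [[|[|[|?]]] ?].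
Qed.

Lemma other (i j l j' : 'I_3) : j != i -> l != i -> j != l -> j' != i -> j' = j \/ j' = l.
Proof. by move=> a b c d; case/orP: (other_b a b c d) => /eqP; [left|right]. Qed.

Lemma invN1 i j : i != j -> (er i - er j)^-1 * (er j - er i) = -1.
Proof. by move=> ij; rewrite -[er j - er i]opprB mulrN mulVf ?er_neq. Qed.

Definition K1 := Kinit x.
Definition V1 := Z y x.
Definition V2 := Z x y.
Definition K3 c := rcons (Kinit x c) (Z x y c).
Definition V3 := Z h x.
Definition K4 c := rcons (Kinit y c) (Z y x c).
Definition V4 := Z h y.
Definition K5 c := rcons (rcons (Kinit h c) (Z h x c)) (Z h y c).
Definition V5 := Z x h.
Definition V6 := Z y h.
Definition Kx c := rcons (K3 c) (Z x h c).
Definition Ky c := rcons (K4 c) (Z y h c).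

Lemma D1 c c' : RS c -> RS c' -> K1 c = K1 c' -> V1 c = V1 c'.
Proof.
move=> Rc Rc' hK; rewrite /V1 /Z mulrC [c' _ / _]mulrC.
apply: (@detU x _ c c' Rc Rc' hK) => j jx; left.
have [->|->] := other hyx hhx hyh jx.
  by rewrite invN1 ?TrN1.
rewrite -opprB invrN mulNr mulrC TrN hcond oppr0 //.
Qed.

Lemma D2 c c' : RS c -> RS c' -> K4 c = K4 c' -> V2 c = V2 c'.
Proof.
move=> Rc Rc' /rcons_inj [] hK _; rewrite /V2 /Z mulrC [c' _ / _]mulrC.
apply: (@detU y _ c c' Rc Rc' hK) => j jy; left.
have [->|->] := other hxy hhy hxh jy.
  by rewrite invN1 ?TrN1 // hyx.
have -> : er h - er y = (er h - er x) - (er y - er x).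
  by rewrite opprB addrA subrK.
rewrite mulrBr mulVf ?er_neq ?hyx // TrB Tr1 subr0 mulrC //.
Qed.

Lemma D3 c c' : RS c -> RS c' -> K3 c = K3 c' -> V3 c = V3 c'.
Proof.
move=> Rc Rc' /rcons_inj [] hK hz; rewrite /V3 /Z mulrC [c' _ / _]mulrC.
apply: (@detU x _ c c' Rc Rc' hK) => j jx.
have [->|->] := other hyx hhx hyh jx; first by right.
by left; rewrite invN1 ?TrN1.
Qed.

Lemma D4 c c' : RS c -> RS c' -> K4 c = K4 c' -> V4 c = V4 c'.
Proof.
move=> Rc Rc' /rcons_inj [] hK hz; rewrite /V4 /Z mulrC [c' _ / _]mulrC.
apply: (@detU y _ c c' Rc Rc' hK) => j jy.
have [->|->] := other hxy hhy hxh jy; first by right.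
by left; rewrite invN1 ?TrN1.
Qed.

Lemma Dh c c' : RS c -> RS c' -> K5 c = K5 c' -> c (er h) = c' (er h).
Proof.
move=> Rc Rc' /rcons_inj [] /rcons_inj [] hK hz1 hz2.
apply: (detG Rc Rc' hK) => j jh.
by have [->|->] := other hxh hyh hxy jh.
Qed.

Lemma D5 c c' : RS c -> RS c' -> K5 c = K5 c' -> V5 c = V5 c'.
Proof. by move=> Rc Rc' hK; rewrite /V5 /Z (Dh Rc Rc' hK). Qed.

Lemma D6 c c' : RS c -> RS c' -> K5 c = K5 c' -> V6 c = V6 c'.
Proof. by move=> Rc Rc' hK; rewrite /V6 /Z (Dh Rc Rc' hK). Qed.

Lemma Dx c c' : RS c -> RS c' -> Kx c = Kx c' -> c (er x) = c' (er x).
Proof.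
move=> Rc Rc' /rcons_inj [] /rcons_inj [] hK hz1 hz2.
apply: (detG Rc Rc' hK) => j jx.
by have [->|->] := other hyx hhx hyh jx.
Qed.

Lemma Dy c c' : RS c -> RS c' -> Ky c = Ky c' -> c (er y) = c' (er y).
Proof.
move=> Rc Rc' /rcons_inj [] /rcons_inj [] hK hz1 hz2.
apply: (detG Rc Rc' hK) => j jy.
by have [->|->] := other hxy hhy hxh jy.
Qed.

Definition dlS (i : 'I_3) (a : F) : seq (F -> F) := [:: fun v => Tr (v / (a - er i))].
Definition xchS : seq ('I_3 * 'I_3 * (seq F -> F)) :=
  [:: (x, y, decode K1 V1); (y, x, decode K4 V2); (x, h, decode K3 V3);
      (y, h, decode K4 V4); (h, x, decode K5 V5); (h, y, decode K5 V6)].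
Definition Kfin i c := if i == h then K5 c else if i == x then Kx c else Ky c.
Definition recS i kn := decode (Kfin i) (fun c => c (er i)) kn.
Definition Sch := DRepair dlS xchS recS.

Lemma init_eq c i : init_know er Sch c i = Kinit i c.
Proof. by rewrite /init_know /Kinit /surv /=; elim: (survivors er) => //= a s ->. Qed.

Lemma Dfin i c c' : RS c -> RS c' -> Kfin i c = Kfin i c' -> c (er i) = c' (er i).
Proof.
move=> Rc Rc'; case/or3P: (hcov i) => /eqP ->; rewrite /Kfin ?eqxx.
- exact: Dh.
- by rewrite (negbTE hxh); exact: Dx.
- by rewrite (negbTE hyh) (negbTE hyx); exact: Dy.
Qed.

Lemma fin_eq c : RS c -> forall i, final_know er Sch c i = Kfin i c.
Proof.
move=> Rc i; rewrite /final_know /= /xstep /= !init_eq.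
have E := (negbTE hxh, negbTE hyh, negbTE hxy, negbTE hyx, negbTE hhx, negbTE hhy).
have e1 : decode K1 V1 (Kinit x c) = V1 c := decodeP D1 Rc.
have e2 : decode K4 V2 (rcons (Kinit y c) (V1 c)) = V2 c := decodeP D2 Rc.
have e3 : decode K3 V3 (rcons (Kinit x c) (V2 c)) = V3 c := decodeP D3 Rc.
have e4 : decode K4 V4 (rcons (Kinit y c) (V1 c)) = V4 c := decodeP D4 Rc.
have e5 : decode K5 V5 (rcons (rcons (Kinit h c) (V3 c)) (V4 c)) = V5 c := decodeP D5 Rc.
have e6 : decode K5 V6 (rcons (rcons (Kinit h c) (V3 c)) (V4 c)) = V6 c := decodeP D6 Rc.
rewrite /Kfin; case/or3P: (hcov i) => /eqP ->; rewrite ?eqxx ?E /=.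
- by rewrite e1 e2 e3 e4.
- by rewrite e1 e2 e3 e4 e5.
- by rewrite e1 e2 e3 e4 e6.
Qed.

Lemma core : exists S : drepair F,
    valid_repair q k er S /\ bandwidth er S = (3 * (#|F| - 1))%N.
Proof.
exists Sch; split; last first.
  rewrite /bandwidth /=.
  under eq_bigr do rewrite sum1_size.
  rewrite big_const_ord /=.
  have := sz er_inj; set s := size _ => hs.
  by rewrite -hs; lia.
split.
- move=> i a g /= [<-|[]] v; exact: Tr_in.
- move=> z /=; case=> [<-|[<-|[<-|[<-|[<-|[<-|[]]]]]]] s /=; apply: decodeB => c _;
    exact: Tr_in.
- move=> c Rc i; rewrite /= fin_eq //.
  by apply: (decodeP (@Dfin i)).
Qed.

End Field.

Unset Implicit Arguments.

Theorem theorem5 (p m t : nat) (F : finFieldType)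
  (hp : prime p) (hm : (0 < m)%N) (ht : (0 < t)%N) (hpt : (p %| t)%N)
  (hF : #|F| = (p ^ (m * t))%N)
  (a1 a2 a3 : F) (h12 : a1 != a2) (h13 : a1 != a3) (h23 : a2 != a3)
  (hK : ((a2 - a1) / (a2 - a3) \in traceKer F (p ^ m) t) \/
        ((a3 - a2) / (a3 - a1) \in traceKer F (p ^ m) t) \/
        ((a1 - a3) / (a1 - a2) \in traceKer F (p ^ m) t)) :
  let n := #|F| in
  let k := (n - n %/ p ^ m)%N in
  exists S : drepair F,
    valid_repair (p ^ m) k (erased3 a1 a2 a3) S /\
    bandwidth (erased3 a1 a2 a3) S = (3 * (n - 1))%N.
Proof.
move=> n k.
have inj : injective (erased3 a1 a2 a3).
  move=> [[|[|[|?]]] ?] [[|[|[|?]]] ?] //; rewrite /erased3 /= => e;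
    first [by apply: val_inj | by move: h12 h13 h23; rewrite e eqxx].
have cov : forall h x y : 'I_3, forall j : 'I_3, [|| j == h, j == x | j == y] ->
  [|| j == h, j == x | j == y] by [].
have ratN : forall a b : F, (- a) / (- b) = a / b by move=> a b; rewrite invrN mulrNN.
case: hK => [|[]]; rewrite inE => /eqP hc.
- apply: (@core p m t F hp hm ht hpt hF _ inj (0 : 'I_3) 1 2) => //.
    by case=> [[|[|[|?]]] ?].
  by rewrite /erased3 /= -(opprB a2 a1) -(opprB a2 a3) ratN.
- apply: (@core p m t F hp hm ht hpt hF _ inj (1 : 'I_3) 2 0) => //.
    by case=> [[|[|[|?]]] ?].
  by rewrite /erased3 /= -(opprB a3 a2) -(opprB a3 a1) ratN.
- apply: (@core p m t F hp hm ht hpt hF _ inj (2 : 'I_3) 0 1) => //.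
    by case=> [[|[|[|?]]] ?].
  by rewrite /erased3 /= -(opprB a1 a3) -(opprB a1 a2) ratN.
Qed.
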